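(* Let $\{Y_{\mathbf z}\}_{\mathbf z\in\mathbb Z^2}$ be arbitrary positive real numbers and $\{W_k\}_{k\in\mathbb Z}$ arbitrary positive real numbers with $W_0=1$. Then for each $\mathbf a\in\mathbb Z^2_{>0}$ and each integer $k\ge1$, $$\frac{Z^W_{\mathbf a}(|\tau|\le k)}{Z^W_{\mathbf a-\mathbf e_1}(|\tau|\le k)}\le\frac{Z^W_{\mathbf a}(\tau\ge0)}{Z^W_{\mathbf a-\mathbf e_1}(\tau\ge0)}\qquad\text{and}\qquad\frac{Z^W_{\mathbf a}(|\tau|\le k)}{Z^W_{\mathbf a-\mathbf e_2}(|\tau|\le k)}\ge\frac{Z^W_{\mathbf a}(\tau\ge0)}{Z^W_{\mathbf a-\mathbf e_2}(\tau\ge0)}.$$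
   Context: $\mathbf e_1=(1,0)$, $\mathbf e_2=(0,1)$. For $\mathbf u,\mathbf v\in\mathbb Z^2$, $\widetilde Z_{\mathbf u,\mathbf v}=\sum_{\mathbf x_\bullet}\prod_{i=1}^nY_{\mathbf x_i}$, $n=|\mathbf v-\mathbf u|_1$, summing over up-right lattice paths $\mathbf x_0=\mathbf u,\dots,\mathbf x_n=\mathbf v$ (the weight at the starting point is excluded), $\widetilde Z_{\mathbf u,\mathbf u}=1$, and $\widetilde Z_{\mathbf u,\mathbf v}=0$ if no such path exists. For a set $\mathcal K\subset\mathbb Z$ and $\mathbf v$ with positive coordinate sum, $Z^W_{\mathbf v}(\tau\in\mathcal K)=\sum_{j\in\mathcal K}W_j\widetilde Z_{(j,-j),\mathbf v}$; thus $Z^W_{\mathbf v}(|\tau|\le k)=\sum_{|j|\le k}W_j\widetilde Z_{(j,-j),\mathbf v}$ and $Z^W_{\mathbf v}(\tau\ge0)=\sum_{j\ge0}W_j\widetilde Z_{(j,-j),\mathbf v}$. *)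

(* Defs.v *)
From mathcomp Require Import all_boot all_order all_algebra.
Set Implicit Arguments. Unset Strict Implicit. Unset Printing Implicit Defensive.
Import Order.TTheory GRing.Theory Num.Theory.
Local Open Scope ring_scope.

Definition pt := (int * int)%type.
Definition e1 : pt := (1, 0).
Definition e2 : pt := (0, 1).
Definition ptadd (x y : pt) : pt := (x.1 + y.1, x.2 + y.2).
Definition ptsub (x y : pt) : pt := (x.1 - y.1, x.2 - y.2).

Definition l1dist (u v : pt) : nat := (absz (v.1 - u.1) + absz (v.2 - u.2))%N.

(* An up-right path of length n from u is encoded by its step sequence
   s : n.-tuple bool (true = step e1, false = step e2).
   upos u s i = x_i, the position after the first i steps (x_0 = u). *)
Definition upos (u : pt) (s : seq bool) (i : nat) : pt :=
  (u.1 + (count id (take i s))%:Z, u.2 + (count negb (take i s))%:Z).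

(* Point-to-point partition function Z~_{u,v}: sum over up-right paths
   x_0 = u, ..., x_n = v with n = |v-u|_1 of prod_{i=1}^n Y_{x_i}.
   (Empty sum = 0 if no such path exists; equals 1 if u = v.) *)
Definition Zt (R : numDomainType) (Y : pt -> R) (u v : pt) : R :=
  let n := l1dist u v in
  \sum_(s : n.-tuple bool | upos u s n == v)
     \prod_(i < n) Y (upos u s i.+1).

(* Z^W_v(tau in K) = sum_{j in K} W_j Z~_{(j,-j),v}.  Only indices with
   -v.2 <= j <= v.1 can contribute (otherwise no up-right path exists),
   so the sum is taken over the window |j| <= |v.1| + |v.2|, which
   contains all nonzero terms. *)
Definition ZW (R : numDomainType) (Y : pt -> R) (W : int -> R)
    (K : pred int) (v : pt) : R :=
  let M := (absz v.1 + absz v.2)%N in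
  \sum_(i < (M + M).+1 | K (i%:Z - M%:Z))
     W (i%:Z - M%:Z) * Zt Y (i%:Z - M%:Z, - (i%:Z - M%:Z)) v.

Definition tau_absle (k : int) : pred int := fun j => `|j| <= k.
Definition tau_ge0 : pred int := fun j => 0 <= j.

(* Main.v *)
Require Import Defs.
From mathcomp Require Import all_boot all_order all_algebra.
From mathcomp Require Import ring lra zify.
Set Implicit Arguments. Unset Strict Implicit. Unset Printing Implicit Defensive.
Import Order.TTheory GRing.Theory Num.Theory.
Local Open Scope ring_scope.

Lemma thead_behead m (t : m.+1.-tuple bool) : thead t :: behead t = t :> seq bool.
Proof. exact: (esym (congr1 val (tuple_eta t))). Qed.

Lemma sum_tuple_rcons (R : nmodType) n (Phi : seq bool -> R) :
  \sum_(t : n.+1.-tuple bool) Phi t =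
  \sum_(t : n.-tuple bool) (Phi (rcons t true) + Phi (rcons t false)).
Proof.
rewrite (reindex (fun p : n.-tuple bool * bool => [tuple of rcons p.1 p.2])) /=.
  rewrite -(pair_big predT predT (fun (t : n.-tuple bool) b => Phi (rcons t b))) /=.
  by apply: eq_bigr => t _; rewrite big_bool.
exists (fun t : n.+1.-tuple bool =>
   ([tuple of belast (thead t) (behead t)], last (thead t) (behead t))).
  move=> [t b] _ /=.
  have E := thead_behead [tuple of rcons t b].
  case: t E => -[|x s] hs /= E.
    by congr pair; apply: val_inj.
  rewrite /thead (tnth_nth x) /=; congr pair; first apply: val_inj => /=.
    by rewrite belast_rcons.
  by rewrite last_rcons.
move=> t _; apply: val_inj => /=.
by rewrite -lastI thead_behead.
Qed.
Section ZtSec.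
Variable (R : realFieldType) (Y : pt -> R).

Definition Sn n u w := \sum_(s : n.-tuple bool | upos u s n == w) \prod_(i < n) Y (upos u s i.+1).

Lemma upos_size u (s : seq bool) :
  upos u s (size s) = (u.1 + (count id s)%:Z, u.2 + (count negb s)%:Z).
Proof. by rewrite /upos take_size. Qed.

Lemma count_tot (s : seq bool) : (count id s + count negb s = size s)%N.
Proof. by rewrite -(count_predC id s). Qed.

Lemma Sn_nz n u w : Sn n u w != 0 ->
  [&& 0 <= w.1 - u.1, 0 <= w.2 - u.2 & l1dist u w == n].
Proof.
apply: contraNT => Hc; rewrite /Sn big_pred0 // => s.
apply/negbTE; apply: contra Hc => /eqP <-.
have := upos_size u s; rewrite size_tuple => ->.
have := count_tot s; rewrite size_tuple /l1dist /= => H.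
apply/and3P; split; [lia|lia|apply/eqP; lia].
Qed.

Lemma Zt_eq u w : Zt Y u w = Sn (l1dist u w) u w.
Proof. by []. Qed.

Lemma Zt0 u w : ~~ ((0 <= w.1 - u.1) && (0 <= w.2 - u.2)) -> Zt Y u w = 0.
Proof.
move=> H; apply/eqP; apply: contraNT H => /Sn_nz /and3P [h1 h2 _].
by rewrite h1 h2.
Qed.

Lemma Sn_Zt n u w : Sn n u w = if l1dist u w == n then Zt Y u w else 0.
Proof.
case: eqP => [<- //|Hn]; apply/eqP; apply/negPn/negP => /Sn_nz /and3P [_ _ /eqP].
by [].
Qed.

Lemma Zt_refl v : Zt Y v v = 1.
Proof.
have H0 : l1dist v v = 0%N by rewrite /l1dist !subrr.
rewrite Zt_eq H0 /Sn (big_pred1 [tuple]).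
  by rewrite big_ord0.
move=> s /=; rewrite tuple0 /upos /= !addr0 -surjective_pairing !eqxx.
by [].
Qed.

Lemma upos_rcons_lt u (t : seq bool) b i : (i <= size t)%N ->
  upos u (rcons t b) i = upos u t i.
Proof. by move=> hi; rewrite /upos -cats1 takel_cat. Qed.

Lemma upos_rcons_end u (t : seq bool) b :
  upos u (rcons t b) (size t).+1 = ptadd (upos u t (size t)) (if b then e1 else e2).
Proof.
rewrite -(size_rcons t b) !upos_size /ptadd -cats1 !count_cat /=.
by case: b; rewrite /e1 /e2 /=; congr pair; lia.
Qed.

Lemma ptadd_eq x e v : (ptadd x e == v) = (x == ptsub v e).
Proof.
case: x e v => [x1 x2] [e1' e2'] [v1 v2]; rewrite /ptadd /ptsub /=.
apply/eqP/eqP => -[h1 h2]; congr pair; lia.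
Qed.

Lemma Zt_rec (u v : pt) : u.1 + u.2 < v.1 + v.2 ->
  Zt Y u v = Y v * (Zt Y u (ptsub v e1) + Zt Y u (ptsub v e2)).
Proof.
move=> hl.
have [hq|hq] := boolP ((0 <= v.1 - u.1) && (0 <= v.2 - u.2)); last first.
  have z1 : Zt Y u (ptsub v e1) = 0.
    apply: Zt0; apply: contra hq => /andP [h1 h2];
    apply/andP; split; rewrite /ptsub /= in h1 h2 *; lia.
  have z2 : Zt Y u (ptsub v e2) = 0.
    apply: Zt0; apply: contra hq => /andP [h1 h2];
    apply/andP; split; rewrite /ptsub /= in h1 h2 *; lia.
  by rewrite z1 z2 (Zt0 hq) addr0 mulr0.
move/andP: hq => [h1 h2].
have [n hn] : exists n, l1dist u v = n.+1.
  have hp : (0 < l1dist u v)%N.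
    rewrite /l1dist; lia.
  by exists (l1dist u v).-1; rewrite prednK.
rewrite Zt_eq hn /Sn big_mkcond /=.
rewrite (@sum_tuple_rcons _ n (fun s : seq bool => if upos u s n.+1 == v then
     \prod_(i < n.+1) Y (upos u s i.+1) else 0)).
rewrite big_split /=.
have key : forall b, \sum_(t : n.-tuple bool) (if upos u (rcons t b) n.+1 == v then
     \prod_(i < n.+1) Y (upos u (rcons t b) i.+1) else 0) =
   Y v * Sn n u (ptsub v (if b then e1 else e2)).
  move=> b; rewrite /Sn [in RHS]big_mkcond mulr_sumr; apply: eq_bigr => t _.
  have := upos_rcons_end u t b; rewrite size_tuple => ->.
  rewrite ptadd_eq; case: ifP => [/eqP E|]; last by rewrite mulr0.
  rewrite big_ord_recr /= mulrC; congr (_ * _).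
    have := upos_rcons_end u t b; rewrite size_tuple => ->; rewrite E /ptadd /ptsub.
    by case: (b); case: (v) => a c /=; congr (Y (_, _)); ring.
  by apply: eq_bigr => i _; rewrite upos_rcons_lt // size_tuple.
rewrite (key true) (key false) /= !(Sn_Zt n) -mulrDr.
congr (_ * (_ + _)).
  case: eqP => // hn1; rewrite Zt0 //; rewrite /ptsub /l1dist /= in hn1 *; apply/negP => /andP [k1 k2].
  apply: hn1; rewrite /l1dist in hn; lia.
case: eqP => // hn1; rewrite Zt0 //; rewrite /ptsub /l1dist /= in hn1 *; apply/negP => /andP [k1 k2].
apply: hn1; rewrite /l1dist in hn; lia.
Qed.

End ZtSec.

Section ZWSec.
Variable (R : realFieldType) (Y : pt -> R) (W : int -> R).

Definition ZWN (K : pred int) (v : pt) (N : nat) :=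
  \sum_(0 <= i < (N + N).+1) (if K (i%:Z - N%:Z)
     then W (i%:Z - N%:Z) * Zt Y (i%:Z - N%:Z, - (i%:Z - N%:Z)) v else 0).

Lemma ZW_ZWN K v : ZW Y W K v = ZWN K v (absz v.1 + absz v.2).
Proof. by rewrite /ZW /ZWN big_mkord big_mkcond. Qed.

Lemma win (f : int -> R) (M d : nat)
  (hf : forall j : int, (j < - M%:Z) || (M%:Z < j) -> f j = 0) :
  \sum_(0 <= i < ((M + d) + (M + d)).+1) f (i%:Z - (M + d)%:Z) =
  \sum_(0 <= i < (M + M).+1) f (i%:Z - M%:Z).
Proof.
elim: d => [|d IH]; first by rewrite addn0.
rewrite -IH addnS addSn big_nat_recr //= big_nat_recl //.
rewrite !hf ?add0r ?addr0; last 2 first.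
- apply/orP; right; lia.
- apply/orP; left; lia.
rewrite addnS; apply: eq_bigr => i _; congr f; lia.
Qed.

Lemma ZW_N K (v : pt) N : (absz v.1 + absz v.2 <= N)%N -> ZW Y W K v = ZWN K v N.
Proof.
move=> hN; rewrite ZW_ZWN -(subnKC hN) /ZWN.
rewrite (@win (fun j => if K j then W j * Zt Y (j, - j) v else 0) (absz v.1 + absz v.2) (N - (absz v.1 + absz v.2))) //.
move=> j hj; case: ifP => // _; rewrite Zt0 ?mulr0 //.
apply/negP => /andP [h1 h2]; rewrite /= in h1 h2; move/orP: hj => [hj|hj]; lia.
Qed.

Lemma ZW_rec K (v : pt) : 0 < v.1 + v.2 ->
  ZW Y W K v = Y v * (ZW Y W K (ptsub v e1) + ZW Y W K (ptsub v e2)).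
Proof.
move=> hv.
pose N := (absz v.1 + absz v.2).+1.
rewrite (@ZW_N K v N) /N; last by lia.
rewrite (@ZW_N K (ptsub v e1) N) /N; last by rewrite /ptsub /=; lia.
rewrite (@ZW_N K (ptsub v e2) N) /N; last by rewrite /ptsub /=; lia.
rewrite /ZWN -big_split mulr_sumr; apply: eq_bigr => i _ /=.
case: ifP => _; last by rewrite addr0 mulr0.
rewrite Zt_rec /=; last by lia.
ring.
Qed.

Lemma ZW_base K (v : pt) : v.1 + v.2 = 0 -> ZW Y W K v = if K v.1 then W v.1 else 0.
Proof.
move=> hv; rewrite ZW_ZWN /ZWN.
set M := (absz v.1 + absz v.2)%N.
pose i0 := absz (v.1 + M%:Z).
have hm : i0 \in index_iota 0 (M + M).+1 by rewrite mem_index_iota /i0 /M; lia.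
have hu : uniq (index_iota 0 (M + M).+1) by rewrite /index_iota iota_uniq.
rewrite (bigD1_seq i0 hm hu) /=.
have E : (i0%:Z - M%:Z) = v.1 by rewrite /i0 /M; lia.
have Ev : (v.1, - v.1) = v by case: (v) hv => a b /= hv; congr pair; lia.
rewrite E Ev Zt_refl mulr1 big1_seq ?addr0 //.
move=> i /andP [hi _]; case: ifP => // _; rewrite Zt0 ?mulr0 //.
move/eqP: hi => hi.
apply/negP => /andP [h1 h2]; rewrite /= in h1 h2; apply: hi; rewrite /i0 /M; lia.
Qed.

End ZWSec.

Lemma tp2 (R : realFieldType) (Y F G : pt -> R) (hY : forall z, 0 < Y z)
  (hF : forall v : pt, 0 < v.1 + v.2 -> F v = Y v * (F (ptsub v e1) + F (ptsub v e2)))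
  (hG : forall v : pt, 0 < v.1 + v.2 -> G v = Y v * (G (ptsub v e1) + G (ptsub v e2)))
  (F0 : forall p : pt, p.1 + p.2 = 0 -> 0 <= F p)
  (G0 : forall p : pt, p.1 + p.2 = 0 -> 0 <= G p)
  (base : forall p q : pt, p.1 + p.2 = 0 -> q.1 + q.2 = 0 -> p.1 < q.1 ->
            F q * G p <= G q * F p) :
  forall n : nat,
  (forall p : pt, p.1 + p.2 = n%:Z -> 0 <= F p /\ 0 <= G p) /\
  (forall p q : pt, p.1 + p.2 = n%:Z -> q.1 + q.2 = n%:Z -> p.1 < q.1 ->
            F q * G p <= G q * F p).
Proof.
elim=> [|n [IH0 IH]].
  by split; [move=> p hp; split; [exact: F0|exact: G0] | exact: base].
have lv : forall p : pt, p.1 + p.2 = n.+1%:Z ->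
   [/\ (ptsub p e1).1 + (ptsub p e1).2 = n, (ptsub p e2).1 + (ptsub p e2).2 = n
     & 0 < p.1 + p.2].
  by move=> p hp; rewrite /ptsub /=; split; lia.
split.
  move=> p hp; have [l1 l2 l3] := lv p hp; rewrite (hF _ l3) (hG _ l3).
  have [a1 b1] := IH0 _ l1; have [a2 b2] := IH0 _ l2.
  by split; apply: mulr_ge0; [exact: ltW|exact: addr_ge0|exact: ltW|exact: addr_ge0].
move=> p q hp hq hpq.
have [p1 p2 p3] := lv p hp; have [q1 q2 q3] := lv q hq.
rewrite (hF _ p3) (hG _ p3) (hF _ q3) (hG _ q3).
have i1 : F (ptsub q e1) * G (ptsub p e1) <= G (ptsub q e1) * F (ptsub p e1).
  by apply: IH => //; rewrite /ptsub /=; lia.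
have i2 : F (ptsub q e2) * G (ptsub p e2) <= G (ptsub q e2) * F (ptsub p e2).
  by apply: IH => //; rewrite /ptsub /=; lia.
have i3 : F (ptsub q e2) * G (ptsub p e1) <= G (ptsub q e2) * F (ptsub p e1).
  by apply: IH => //; rewrite /ptsub /=; lia.
have i4 : F (ptsub q e1) * G (ptsub p e2) <= G (ptsub q e1) * F (ptsub p e2).
  have [h|h] := ltrP p.1 (q.1 - 1).
    by apply: IH => //; rewrite /ptsub /=; lia.
  have E : ptsub q e1 = ptsub p e2.
    move: hp hq hpq h; rewrite /ptsub; case: (p) => [x1 x2]; case: (q) => [y1 y2] /= *.
    congr pair; lia.
  by rewrite E mulrC.
have H : (F (ptsub q e1) + F (ptsub q e2)) * (G (ptsub p e1) + G (ptsub p e2)) <=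
         (G (ptsub q e1) + G (ptsub q e2)) * (F (ptsub p e1) + F (ptsub p e2)).
  rewrite !mulrDl !mulrDr; lra.
have E1 : forall a b c d : R, Y q * (a + b) * (Y p * (c + d)) = (Y q * Y p) * ((a + b) * (c + d)).
  by move=> *; ring.
rewrite !E1 ler_wpM2l //.
by apply: mulr_ge0; apply: ltW.
Qed.

Lemma posF (R : realFieldType) (Y F : pt -> R) (hY : forall z, 0 < Y z)
  (hF : forall v : pt, 0 < v.1 + v.2 -> F v = Y v * (F (ptsub v e1) + F (ptsub v e2)))
  (nn : forall p : pt, 0 <= p.1 + p.2 -> 0 <= F p) (F00 : 0 < F (0, 0)) :
  forall n : nat, forall v : pt, v.1 + v.2 = n%:Z -> 0 <= v.1 -> 0 <= v.2 -> 0 < F v.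
Proof.
elim=> [|n IH] v hv h1 h2.
  have -> : v = (0, 0) by case: (v) hv h1 h2 => a b /= *; congr pair; lia.
  exact: F00.
rewrite hF; last by lia.
apply: mulr_gt0 => //.
have [h|h] := ltrP 0 v.1.
  have := IH (ptsub v e1); rewrite /ptsub /= => /(_ ltac:(lia) ltac:(lia) ltac:(lia)) H1.
  have := nn (ptsub v e2); rewrite /ptsub /= => /(_ ltac:(lia)) H2.
  lra.
have := IH (ptsub v e2); rewrite /ptsub /= => /(_ ltac:(lia) ltac:(lia) ltac:(lia)) H1.
have := nn (ptsub v e1); rewrite /ptsub /= => /(_ ltac:(lia)) H2.
lra.
Qed.

Theorem propositionA4 (R : realFieldType) (Y : pt -> R) (W : int -> R)
  (hY : forall z, 0 < Y z) (hW : forall j, 0 < W j) (hW0 : W 0 = 1)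
  (a : pt) (ha1 : 0 < a.1) (ha2 : 0 < a.2) (k : int) (hk : 1 <= k) :
  ZW Y W (tau_absle k) a / ZW Y W (tau_absle k) (ptsub a e1)
    <= ZW Y W tau_ge0 a / ZW Y W tau_ge0 (ptsub a e1)
  /\
  ZW Y W (tau_absle k) a / ZW Y W (tau_absle k) (ptsub a e2)
    >= ZW Y W tau_ge0 a / ZW Y W tau_ge0 (ptsub a e2).
Proof.
pose F := ZW Y W (tau_absle k); pose G := ZW Y W tau_ge0.
have hW' : forall j, 0 <= W j by move=> j; apply: ltW.
have hF : forall v : pt, 0 < v.1 + v.2 -> F v = Y v * (F (ptsub v e1) + F (ptsub v e2)).
  by move=> v hv; apply: ZW_rec.
have hG : forall v : pt, 0 < v.1 + v.2 -> G v = Y v * (G (ptsub v e1) + G (ptsub v e2)).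
  by move=> v hv; apply: ZW_rec.
have F0 : forall p : pt, p.1 + p.2 = 0 -> 0 <= F p.
  by move=> p hp; rewrite /F ZW_base //; case: ifP.
have G0 : forall p : pt, p.1 + p.2 = 0 -> 0 <= G p.
  by move=> p hp; rewrite /G ZW_base //; case: ifP.
have base : forall p q : pt, p.1 + p.2 = 0 -> q.1 + q.2 = 0 -> p.1 < q.1 ->
            F q * G p <= G q * F p.
  move=> p q hp hq hpq; rewrite /F /G !ZW_base //.
  case h1: (tau_absle k q.1); case h2: (tau_ge0 p.1); rewrite ?mul0r ?mulr0;
    try (by apply: mulr_ge0; case: ifP).
  move: h1 h2; rewrite /tau_absle /tau_ge0 => h1 h2.
  have -> : `|p.1| <= k by lia.
  have -> : 0 <= q.1 by lia.
  by rewrite mulrC.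
have T := tp2 hY hF hG F0 G0 base.
have nnF : forall p : pt, 0 <= p.1 + p.2 -> 0 <= F p.
  move=> p hp; have [h _] := T (absz (p.1 + p.2)%R).
  by have [] := h p ltac:(lia).
have nnG : forall p : pt, 0 <= p.1 + p.2 -> 0 <= G p.
  move=> p hp; have [h _] := T (absz (p.1 + p.2)%R).
  by have [] := h p ltac:(lia).
have F00 : 0 < F (0, 0).
  rewrite /F ZW_base //= /tau_absle.
  have -> : `|0 : int| <= k by lia.
  exact: hW.
have G00 : 0 < G (0, 0) by rewrite /G ZW_base //=.
have PF := posF hY hF nnF F00.
have PG := posF hY hG nnG G00.
have pos : forall H : pt -> R, (forall n : nat, forall v : pt, v.1 + v.2 = n%:Z -> 0 <= v.1 -> 0 <= v.2 -> 0 < H v) ->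
   0 < H (ptsub a e1) /\ 0 < H (ptsub a e2).
  move=> H hH; split.
    by apply: (hH (absz (a.1 - 1 + a.2)%R)); rewrite /ptsub /=; lia.
  have E1 : (ptsub a e2).1 + (ptsub a e2).2 = (absz (a.1 + a.2 - 1)%R)%:Z by rewrite /ptsub /=; lia.
  have E2 : 0 <= (ptsub a e2).1 by rewrite /ptsub /=; lia.
  have E3 : 0 <= (ptsub a e2).2 by rewrite /ptsub /=; lia.
  exact: (hH _ _ E1 E2 E3).
have [pF1 pF2] := pos F PF; have [pG1 pG2] := pos G PG.
have key : F (ptsub a e2) * G (ptsub a e1) <= G (ptsub a e2) * F (ptsub a e1).
  have [_ h] := T (absz (a.1 + a.2 - 1)%R).
  by apply: h; rewrite /ptsub /=; lia.
have la : 0 < a.1 + a.2 by lia.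
have Ya := hY a.
have kk : 0 <= Y a * (G (ptsub a e2) * F (ptsub a e1) - F (ptsub a e2) * G (ptsub a e1)).
  by apply: mulr_ge0; [exact: ltW | rewrite subr_ge0].
split.
  rewrite -/F -/G ler_pdivrMr // mulrAC ler_pdivlMr // (hF a la) (hG a la).
  nra.
rewrite -/F -/G ler_pdivrMr // mulrAC ler_pdivlMr // (hF a la) (hG a la).
nra.
Qed.
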